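(* Let $\mu\in\mathbb{C}$ and let $\{S_n(z)\}_{n\ge -1}$ be a sequence of rational functions in $z$ satisfying $S_{-1}=S_0=1$ and the recurrence $$S_{n+1}S_{n-1}=-z\left[S_n\frac{d^2S_n}{dz^2}-\left(\frac{dS_n}{dz}\right)^2\right]-S_n\frac{dS_n}{dz}+(z+\mu)S_n^2,\qquad n\ge 0,$$ and suppose that the nonzero roots of each $S_n$ are simple. Then for every $N\in\mathbb{N}\cup\{0\}$, if $z=0$ is not a root of any $S_n(z)$ with $0\le n\le N$, the following hold: (a) $S_{N+1}(z)$ is a polynomial of degree $\tfrac12(N+1)(N+2)$; (b) $S_{N+1}(z)$ and $S_N(z)$ have no common root.
   Context: The functions $S_n(z)=S_n(z;\mu)$ (Umemura polynomials associated with the third Painlevé equation) are defined by the recurrence in the claim, each $S_{n+1}$ being a priori the rational function obtained by dividing the right-hand side by $S_{n-1}$. *)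

(* Defs.v *)
From mathcomp Require Import all_boot all_algebra fraction.
From mathcomp Require Import complex.
From mathcomp Require Import reals Rstruct.
Set Implicit Arguments. Unset Strict Implicit. Unset Printing Implicit Defensive.
Import GRing.Theory.
Local Open Scope ring_scope.

Definition C : numClosedFieldType := complex Rdefinitions.R.

Definition ratfun : fieldType := {fraction {poly C}}.

Definition zF : ratfun := tofrac 'X.

Definition constF (c : C) : ratfun := tofrac (c%:P).

(* d/dz of a rational function f = n/d : (n' d - n d') / d^2, computed on the
   canonical representative of f (the result does not depend on it). *)
Definition ratderiv (f : ratfun) : ratfun :=
  let r := repr f in
  tofrac ((\n_r)^`() * \d_r - \n_r * (\d_r)^`()) / tofrac ((\d_r) ^+ 2).

Definition ratroot (f : ratfun) (z : C) : Prop :=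
  exists p q : {poly C},
    [/\ q != 0, coprimep p q, f = tofrac p / tofrac q & root p z].

Definition nonzero_roots_simple (f : ratfun) : Prop :=
  forall (p q : {poly C}) (z : C),
    q != 0 -> coprimep p q -> f = tofrac p / tofrac q ->
    z != 0 -> root p z -> ~~ root p^`() z.

Definition is_poly_of_degree (f : ratfun) (d : nat) : Prop :=
  exists p : {poly C}, f = tofrac p /\ size p = d.+1.

(* Main.v *)
Require Import Defs.
From mathcomp Require Import all_boot all_algebra fraction.
From mathcomp Require Import complex.
From mathcomp Require Import reals Rstruct.
From mathcomp Require Import ring zify generic_quotient.
Import GRing.Theory.
Local Open Scope ring_scope.

Lemma e1 (n : nat) : (n.+2)%:Z - 1 = n%:Z + 1.
Proof. lia. Qed.
Lemma e2 (n : nat) : (n.+1)%:Z - 1 = n%:Z.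
Proof. lia. Qed.
Lemma e3 (n : nat) : (-1 <= n%:Z - 1)%R.
Proof. lia. Qed.
Lemma e4 N : (((N.+2 * N.+1)./2).+1 = ((N.+1 * N.+2) %/ 2).+1)%N.
Proof. by rewrite -divn2 mulnC. Qed.
Lemma e5 n : ('C(n.+2, 2) = 'C(n,2) + n + n.+1)%N.
Proof. rewrite binS [X in (_ + X)%N]bin1 binS bin1. lia. Qed.

Lemma ratderiv_tofrac (p : {poly C}) : ratderiv (tofrac p) = tofrac p^`().
Proof.
rewrite /ratderiv.
have -> : tofrac p = (\pi_({fraction {poly C}}))%qT (Ratio p 1) by unlock tofrac.
have E := FracField.equivf_l (Ratio p 1).
rewrite !numden_Ratio ?oner_neq0 // mulr1 in E.
set r := repr _ in E *.
have dn0 : \d_r != 0 by [].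
rewrite E.
apply/eqP; rewrite -[tofrac p^`()]divr1 eqr_div ?tofrac_eq0 ?mulr1 ?tofrac_eq0 ?expf_neq0 ?oner_neq0 //.
rewrite -!tofracM tofrac_eq; apply/eqP.
rewrite derivM; ring.
Qed.

Definition Phi (mu : C) (u : {poly C}) : {poly C} :=
  - 'X * (u * u^`()^`() - u^`() ^+ 2) - u * u^`() + ('X + mu%:P) * u ^+ 2.

Lemma jet mu (f g h : {poly C}) a : f.[a] = 0 -> h.[a] != 0 ->
  g * h = Phi mu f -> (Phi mu h).[a] = 0 -> (Phi mu g).[a] = 0.
Proof.
move=> fa ha E Ph.
have e0 := congr1 (fun p => p.[a]) E.
have e1 := congr1 (fun p => p^`().[a]) E.
have e2 := congr1 (fun p => p^`()^`().[a]) E.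
move: e0 e1 e2 Ph; rewrite /Phi /=. rewrite !derivE !(hornerD, hornerN, hornerM, hornerX, hornerC, horner_exp) fa.
move: (g.[a]) (g^`().[a]) (g^`()^`().[a]) (h^`().[a]) (h^`()^`().[a]) (f^`().[a]) (f^`()^`().[a]) (f^`()^`()^`().[a]) (f^`()^`()^`()^`().[a]) ha.
move: (h.[a]) => h0 g0 g1 g2 h1 h2 f1 f2 f3 f4 ha e0 e1 e2 Ph.
have G0 : g0 = g0 * h0 / h0 by rewrite mulfK.
rewrite e0 in G0.
have G1 : g1 = (g1 * h0 + g0 * h1 - g0 * h1) / h0 by rewrite addrK mulfK.
rewrite e1 in G1.
have G2 : g2 = (g2 * h0 + g1 * h1 + (g1 * h1 + g0 * h2) - (g1 * h1 + (g1 * h1 + g0 * h2))) / h0.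
  by rewrite -[_ + (_ + _)]addrA addrK mulfK.
rewrite e2 in G2.
have key : h0 ^+ 2 * (- a * (g0 * g2 - g1 * g1) - g0 * g1 + (a + mu) * (g0 * g0)) +
   g0 ^+ 2 * (- a * (h0 * h2 - h1 * h1) - h0 * h1 + (a + mu) * (h0 * h0)) = 0.
  rewrite G2 G1 G0; field; exact: ha.
rewrite Ph mulr0 addr0 in key.
by move/eqP: key; rewrite mulf_eq0 expf_eq0 (negbTE ha) /= => /eqP.
Qed.

Lemma dvd_simple (p q : {poly C}) : p != 0 ->
  (forall a, root p a -> root q a /\ ~~ root p^`() a) -> p %| q.
Proof.
move: {2}(size p) (leqnn (size p)) => n; elim: n p q => [|n IH] p q.
  by rewrite size_poly_leq0 => /eqP -> ; rewrite eqxx.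
move=> sp pn0 H.
have [/eqP s1|] := eqVneq (size p) 1%N.
  by rewrite size_poly_eq1 in s1; rewrite (eqp_dvdl _ s1) dvd1p.
move/closed_rootP => [a ra].
have [p1 Ep] : exists p1, p = p1 * ('X - a%:P) by apply/factor_theorem.
have [qa _] := H a ra.
have [q1 Eq] : exists q1, q = q1 * ('X - a%:P) by apply/factor_theorem.
rewrite Ep Eq dvdp_mul //.
have p1n0 : p1 != 0 by apply: contraNneq pn0 => p10; rewrite Ep p10 mul0r.
apply: IH => //.
  move: sp; rewrite Ep size_Mmonic ?monicXsubC // size_XsubC addn2 ltnS.
  by [].
move=> b rb.
have rpb : root p b by rewrite Ep rootM rb.
have [qb nd] := H b rpb.
have dp : p^`() = p1^`() * ('X - a%:P) + p1 by rewrite Ep derivM derivXsubC mulr1.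
have ba : b != a.
  apply: contraNneq nd => eba; rewrite dp /root !hornerE -eba (eqP rb) subrr mulr0 addr0.
  by [].
split.
  move: qb; rewrite Eq rootM root_XsubC (negbTE ba) orbF //.
move: nd; rewrite dp /root !hornerE (eqP rb) addr0 mulf_eq0 negb_or => /andP[] //.
Qed.

Lemma size_deriv_le (p : {poly C}) : (size p^`() <= (size p).-1)%N.
Proof.
have [->|pn0] := eqVneq p 0; first by rewrite deriv0 size_poly0.
have := lt_size_deriv pn0; lia.
Qed.

Lemma size_Phi mu (g : {poly C}) : g != 0 -> size (Phi mu g) = (2 * size g)%N.
Proof.
move=> gn0.
have s1 := size_deriv_le g.
have s2 := size_deriv_le g^`().
have sg : (0 < size g)%N by rewrite size_poly_gt0.
have a1 := size_polyMleq g g^`()^`().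
have a2 := size_polyMleq g^`() g^`().
have a3 := size_polyD (g * g^`()^`()) (- g^`() ^+ 2).
rewrite size_polyN expr2 in a3.
have a4 := size_polyMleq (- 'X) (g * g^`()^`() - g^`() ^+ 2).
have sX : size (- 'X : {poly C}) = 2%N by rewrite size_polyN size_polyX.
have a5 := size_polyMleq g g^`().
have a6 := size_polyD (- 'X * (g * g^`()^`() - g^`() ^+ 2)) (- (g * g^`())).
rewrite size_polyN in a6.
have b1 : size (('X + mu%:P) * g ^+ 2) = (2 * size g)%N.
  rewrite size_mul ?expf_neq0 //; last by rewrite -size_poly_gt0 size_XaddC.
  have e2 : size ('X + mu%:P) = 2%N by rewrite size_XaddC.
  rewrite e2 expr2 size_mul // (polySpred gn0); lia.
rewrite /Phi addrC size_polyDl b1 //.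
rewrite expr2 in a4 a6 *.
move: a1 a2 a3 a4 a5 a6 s1 s2 sg sX.
move: (size (- 'X * (g * g^`()^`() - g^`() * g^`()) - g * g^`())) => B.
move: (size (- 'X * (g * g^`()^`() - g^`() * g^`()))) => A2.
move: (size (g * g^`()^`() - g^`() * g^`())) => A.
move: (size (g * g^`()^`())) (size (g^`() * g^`())) (size (g * g^`())) => c1 c2 c3.
move: (size (- 'X : {poly C})) (size g^`()^`()) (size g^`()) (size g) => x d2 d1 s.
lia.
Qed.

Definition Rexpr mu (x : ratfun) : ratfun :=
  - zF * (x * ratderiv (ratderiv x) - (ratderiv x) ^+ 2)
  - x * ratderiv x + (zF + constF mu) * x ^+ 2.

Lemma PhiF mu (p : {poly C}) : Rexpr mu (tofrac p) = tofrac (Phi mu p).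
Proof.
rewrite /Rexpr /Phi !ratderiv_tofrac /zF /constF.
by rewrite !(rmorphB, rmorphD, rmorphM, rmorphN, rmorphXn).
Qed.

Lemma ratroot_tofrac (p : {poly C}) z : ratroot (tofrac p) z -> root p z.
Proof.
move=> [p0 [q [qn0 cop E r0]]].
have E' : p0 = p * q.
  apply/eqP; rewrite -tofrac_eq rmorphM /= E divfK // tofrac_eq0 //.
move: r0; rewrite E' rootM => /orP[] // rq.
have := coprimep_root cop (_ : root p0 z).
by rewrite E' rootM rq orbT (eqP rq) eqxx => /(_ isT).
Qed.

Lemma root_ratroot (p : {poly C}) z : root p z -> ratroot (tofrac p) z.
Proof.
move=> r; exists p, 1; split => //; first exact: oner_neq0.
  exact: coprimep1.
by rewrite rmorph1 divr1.
Qed.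

Lemma simple_tofrac (p : {poly C}) z : nonzero_roots_simple (tofrac p) ->
  z != 0 -> root p z -> ~~ root p^`() z.
Proof.
move=> H zn0 r; apply: (H p 1) => //; first exact: oner_neq0.
  exact: coprimep1.
by rewrite rmorph1 divr1.
Qed.

Definition sz (m : nat) : nat := ('C(m, 2) + 1)%N.

Definition Inv mu (T : nat -> ratfun) (n : nat) : Prop :=
  exists f g h k : {poly C},
    T n = tofrac f /\ T n.+1 = tofrac g /\ size f = sz n /\ size g = sz n.+1 /\
    g * h = Phi mu f /\ Phi mu h = f * k /\
    (forall a, root h a -> ~~ root f a) /\ (forall a, root f a -> ~~ root g a).

Lemma Phi1 mu : Phi mu 1 = 'X + mu%:P.
Proof. by rewrite /Phi derivC deriv0 expr1n; ring. Qed.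

Lemma Phi_root mu (g : {poly C}) a : root g a -> (Phi mu g).[a] = a * (g^`().[a]) ^+ 2.
Proof.
move=> /eqP r; rewrite /Phi !(hornerD, hornerN, hornerM, hornerX, hornerC, horner_exp) r.
ring.
Qed.

Theorem theorem3p2 (mu : C) (S : int -> ratfun)
  (HSm1 : S (-1) = 1) (HS0 : S 0 = 1)
  (Srec : forall n : nat,
     S (n%:Z + 1) * S (n%:Z - 1) =
       - zF * (S n * ratderiv (ratderiv (S n)) - (ratderiv (S n)) ^+ 2)
       - S n * ratderiv (S n) + (zF + constF mu) * (S n) ^+ 2)
  (Ssimple : forall n : int, (-1 <= n)%R -> nonzero_roots_simple (S n))
  (N : nat)
  (H0 : forall n : nat, (n <= N)%N -> ~ ratroot (S n) 0) :
  is_poly_of_degree (S (N%:Z + 1)) (((N.+1) * (N.+2)) %/ 2)%N /\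
  ~ (exists z : C, ratroot (S (N%:Z + 1)) z /\ ratroot (S N) z).
Proof.
pose T (m : nat) := S (m%:Z - 1).
have Trec : forall n, T n.+2 * T n = Rexpr mu (T n.+1).
  by move=> n; rewrite /T e1 e2; exact: Srec.
have T0 : T 0%N = 1 by rewrite /T.
have T1 : T 1%N = 1 by rewrite /T e2.
have Ss : forall m, nonzero_roots_simple (T m) by move=> m; apply: Ssimple; exact: e3.
have HT : forall m, (m <= N)%N -> ~ ratroot (T m.+1) 0 by move=> m hm; rewrite /T e2; exact: H0.
have base : Inv mu T 1.
  have T2 : T 2%N = tofrac ('X + mu%:P).
    have := Trec 0%N; rewrite T0 mulr1 T1 -tofrac1 PhiF Phi1 //.
  exists 1, ('X + mu%:P), 1, ('X + mu%:P); rewrite rmorph1.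
  split; first exact: T1.
  split; first exact: T2.
  split; first by rewrite size_poly1.
  split; first by rewrite size_XaddC.
  split; first by rewrite mulr1 Phi1.
  split; first by rewrite mul1r Phi1.
  by split=> a r; move: (root1 a); rewrite r.
have step : forall n, (0 < n)%N -> (n <= N)%N -> Inv mu T n -> Inv mu T n.+1.
  move=> n n0 nN [f [g [h [k [Tf [Tg [sf [sg [Egh [Ehk [chf cfg]]]]]]]]]]].
  have fn0 : f != 0 by rewrite -size_poly_gt0 sf /sz addn1.
  have gn0 : g != 0 by rewrite -size_poly_gt0 sg /sz addn1.
  have dv : f %| Phi mu g.
    apply: dvd_simple => // a ra.
    have an0 : a != 0.
      apply/eqP => a0; apply: (HT n.-1); first by lia.
      rewrite prednK // Tf; apply: root_ratroot; by rewrite -a0.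
    split; last first.
      apply: (simple_tofrac f) => //; by rewrite -Tf.
    apply/eqP; apply: (jet mu f g h) => //.
      exact/eqP.
      exact: contraL (chf a) ra.
    by rewrite Ehk hornerM (eqP ra) mul0r.
  have [G EG] := dvdpP _ _ dv.
  have Gn0 : G != 0.
    apply/eqP => G0; move: (size_Phi mu g gn0); rewrite EG G0 mul0r size_poly0 sg /sz.
    lia.
  have TG : T n.+2 = tofrac G.
    have := Trec n; rewrite Tf Tg PhiF EG rmorphM /=.
    by apply: mulIf; rewrite tofrac_eq0.
  exists g, G, f, h.
  split; first exact: Tg.
  split; first exact: TG.
  split; first exact: sg.
  split.
    have := size_Phi mu g gn0; rewrite EG size_mul // sf sg /sz e5.
    move=> ee; rewrite !binS !bin1 in ee *; move: ee; move: (size G) => sG ee; lia.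
  split; first by rewrite EG.
  split; first by rewrite -Egh.
  split; first exact: cfg.
  move=> a ra; apply/negP => rG.
  have : (Phi mu g).[a] = 0 by rewrite EG hornerM (eqP rG) mul0r.
  rewrite Phi_root // => /eqP; rewrite mulf_eq0 expf_eq0 /= => /orP[/eqP a0|].
    apply: (HT n) => //; rewrite Tg; apply: root_ratroot; by rewrite -a0.
  apply/negP; apply: (simple_tofrac g) => //.
    by rewrite -Tg.
  apply/eqP => a0; apply: (HT n) => //; rewrite Tg; apply: root_ratroot; by rewrite -a0.
have all : forall n, (0 < n)%N -> (n <= N.+1)%N -> Inv mu T n.
  elim=> [//|n IH] _ hn.
  have [->|n0] := eqVneq n 0%N; first exact: base.
  apply: step; [by lia | by lia | apply: IH; lia].
have [f [g [h [k [Tf [Tg [sf [sg [Egh [Ehk [chf cfg]]]]]]]]]]] := all N.+1 isT (leqnn _).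
have ES1 : S (N%:Z + 1) = tofrac g by rewrite -Tg /T e1.
have ES2 : S N = tofrac f by rewrite -Tf /T e2.
split.
  exists g; split => //; rewrite sg /sz bin2 addn1 e4 //.
rewrite ES1 ES2 => [[z [/ratroot_tofrac rg /ratroot_tofrac rf]]].
by have := cfg z rf; rewrite rg.
Qed.
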